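(* For every $n$, every $\sigma\in S_n$ and every pair $P,Q$ of standard Young tableaux of a common shape $\lambda\vdash n$, we have $\mathcal{P}(\sigma\rightarrow P,Q)=\mathcal{P}(\sigma^{-1}\rightarrow Q,P)$ and $\overline{\mathcal{P}}(\sigma\leftarrow P,Q)=\overline{\mathcal{P}}(\sigma^{-1}\leftarrow Q,P)$.
   Context: All quantities are rational functions of indeterminates $q,t$. Partitions are Young diagrams in French convention (cells $(x,y)\in\mathbb{Z}_{>0}^2$ with $x\le\lambda_y$), $\lambda'$ the conjugate; for $c=(x,y)\in\lambda$, $a_\lambda(c)=\lambda_y-x$, $\ell_\lambda(c)=\lambda'_x-y$; $n(\kappa)=\sum_{c\in\kappa}\ell_\kappa(c)$, $n'(\kappa)=\sum_{c\in\kappa}a_\kappa(c)$, $n(\rho/\kappa)=n(\rho)-n(\kappa)$, $n'(\rho/\kappa)=n'(\rho)-n'(\kappa)$. $\mathcal{U}(\lambda)$, $\mathcal{D}(\lambda)$: partitions obtained by adding, resp. removing, one cell; $\mathcal{D}^*(\lambda)=\mathcal{D}(\lambda)\cup\{\lambda\}$. For $\kappa\subseteq\rho$, $\mathcal{R}_{\rho/\kappa}$ (resp. $\mathcal{C}_{\rho/\kappa}$): cells of $\kappa$ in a row (resp. column) containing a cell of $\rho/\kappa$. $[i,j]=1-q^it^j$. For $\kappa$ obtained from $\rho$ by removing one cell: $\alpha_{\rho/\kappa}=\prod_{c\in\mathcal{R}_{\rho/\kappa}}\frac{[a_\kappa(c),\ell_\kappa(c)+1]}{[a_\rho(c),\ell_\rho(c)+1]}\prod_{c\in\mathcal{C}_{\rho/\kappa}}\frac{[a_\kappa(c)+1,\ell_\kappa(c)]}{[a_\rho(c)+1,\ell_\rho(c)]}$,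 $\overline{\alpha}_{\rho/\kappa}$ the same with the roles of ''$+1$ on the first entry'' and ''$+1$ on the second entry'' exchanged in both products, $\beta=1/\alpha$, $\overline{\beta}=1/\overline{\alpha}$. Local probabilities: $\mathcal{P}_\lambda(\lambda\rightarrow\nu)=t^{n(\nu/\lambda)}\alpha_{\nu/\lambda}$, $\overline{\mathcal{P}}_\lambda(\lambda\leftarrow\nu)=t^{n(\nu/\lambda)}\overline{\alpha}_{\nu/\lambda}$; for $\mu\in\mathcal{D}(\lambda)$, with $A=n'(\lambda/\mu)-n'(\nu/\lambda)$, $B=n(\nu/\lambda)-n(\lambda/\mu)$, $\gamma=\frac{(1-q^At^B)(1-q^{A+1}t^{B-1})}{(1-q)(1-t)}$: $\mathcal{P}_\lambda(\mu\rightarrow\nu)=t^{B-1}\alpha_{\nu/\lambda}\beta_{\lambda/\mu}/\gamma$, $\overline{\mathcal{P}}_\lambda(\mu\leftarrow\nu)=t^{B-1}\overline{\alpha}_{\nu/\lambda}\overline{\beta}_{\lambda/\mu}/\gamma$. Growths: for $\sigma\in S_n$, take the $n\times n$ grid with vertices $(i,j)$, $0\le i,j\le n$ (matrix coordinates); square $(i,j)$ has vertices NW $(i-1,j-1)$, NE $(i-1,j)$, SW $(i,j-1)$, SE $(i,j)$, and contains a 1 iff $i=\sigma(j)$. A growth associated with $\sigma$ is a labeling $\Lambda_{ij}$ of vertices by partitions with $\Lambda_{ij}\subseteq\Lambda_{i,j+1}$, $\Lambda_{ij}\subseteq\Lambda_{i+1,j}$ and $|\Lambda_{ij}|$ = number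 of squares $(i',j')$, $i'\le i$, $j'\le j$, containing a 1. $P(\Lambda)$ (resp. $Q(\Lambda)$) is the standard Young tableau with entry $i$ in the cell $\Lambda_{i,n}/\Lambda_{i-1,n}$ (resp. $\Lambda_{n,i}/\Lambda_{n,i-1}$). A square is of type III if its NE and SW vertices are both $\lambda$, NW vertex $\mu\in\mathcal{D}^*(\lambda)$, SE vertex $\nu\in\mathcal{U}(\lambda)$; then $\mathcal{P}(\square)=\mathcal{P}_\lambda(\mu\rightarrow\nu)$, $\overline{\mathcal{P}}(\square)=\overline{\mathcal{P}}_\lambda(\mu\leftarrow\nu)$; other squares have $\mathcal{P}(\square)=\overline{\mathcal{P}}(\square)=1$. $\mathcal{P}(\Lambda)=\prod_\square\mathcal{P}(\square)$, $\overline{\mathcal{P}}(\Lambda)=\prod_\square\overline{\mathcal{P}}(\square)$, and $\mathcal{P}(\sigma\rightarrow P,Q)=\sum\mathcal{P}(\Lambda)$, $\overline{\mathcal{P}}(\sigma\leftarrow P,Q)=\sum\overline{\mathcal{P}}(\Lambda)$, sums over growths $\Lambda$ associated with $\sigma$ with $P(\Lambda)=P$, $Q(\Lambda)=Q$. *)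

(* Defs.v *)
From HB Require Import structures.
From mathcomp Require Import all_boot all_order all_algebra all_fingroup.
From mathcomp Require Import fraction.
Set Implicit Arguments. Unset Strict Implicit. Unset Printing Implicit Defensive.
Import Order.TTheory GRing.Theory Num.Theory.

Definition Kqt : fieldType := {fraction {poly {poly rat}}}.
Definition qv : Kqt := tofrac (('X : {poly rat})%:P : {poly {poly rat}}).
Definition tv : Kqt := tofrac ('X : {poly {poly rat}}).

Local Open Scope ring_scope.
Definition brk (i j : int) : Kqt := 1 - qv ^ i * tv ^ j.
Local Close Scope ring_scope.

(* Partitions (as weakly decreasing lists of positive parts), French      *)
(* convention, cells (x,y) with 1 <= x <= lambda_y, 1 <= y.               *)
Definition is_part (l : seq nat) : bool := sorted geq l && all (fun p => 0 < p) l.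
Definition prow (l : seq nat) (y : nat) : nat := nth 0 l y.-1.
Definition pcol (l : seq nat) (x : nat) : nat := count (fun p => x <= p) l.
Definition cells (l : seq nat) : seq (nat * nat) :=
  flatten [seq [seq (x, y) | x <- iota 1 (prow l y)] | y <- iota 1 (size l)].
Definition arm (l : seq nat) (c : nat * nat) : nat := prow l c.2 - c.1.
Definition leg (l : seq nat) (c : nat * nat) : nat := pcol l c.1 - c.2.
Definition nfun (l : seq nat) : nat := \sum_(c <- cells l) leg l c.
Definition nfun' (l : seq nat) : nat := \sum_(c <- cells l) arm l c.
Definition nskew (r k : seq nat) : int := (nfun r)%:Z - (nfun k)%:Z.
Definition nskew' (r k : seq nat) : int := (nfun' r)%:Z - (nfun' k)%:Z.
Definition subpart (k r : seq nat) : bool := all (fun c => c \in cells r) (cells k).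
Definition inU (l nu : seq nat) : bool :=
  [&& is_part nu, subpart l nu & sumn nu == (sumn l).+1].
Definition inD (l mu : seq nat) : bool :=
  [&& is_part mu, subpart mu l & (sumn mu).+1 == sumn l].
Definition inDstar (l mu : seq nat) : bool := inD l mu || (mu == l).

Definition skew (r k : seq nat) : seq (nat * nat) :=
  [seq c <- cells r | c \notin cells k].
Definition Rcells (r k : seq nat) : seq (nat * nat) :=
  [seq c <- cells k | has (fun d => d.2 == c.2) (skew r k)].
Definition Ccells (r k : seq nat) : seq (nat * nat) :=
  [seq c <- cells k | has (fun d => d.1 == c.1) (skew r k)].

Local Open Scope ring_scope.
Definition alpha (r k : seq nat) : Kqt :=
  (\prod_(c <- Rcells r k)
      (brk (arm k c) (leg k c + 1)%N / brk (arm r c) (leg r c + 1)%N)) *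
  (\prod_(c <- Ccells r k)
      (brk (arm k c + 1)%N (leg k c) / brk (arm r c + 1)%N (leg r c))).
Definition alphabar (r k : seq nat) : Kqt :=
  (\prod_(c <- Rcells r k)
      (brk (arm k c + 1)%N (leg k c) / brk (arm r c + 1)%N (leg r c))) *
  (\prod_(c <- Ccells r k)
      (brk (arm k c) (leg k c + 1)%N / brk (arm r c) (leg r c + 1)%N)).
Definition beta (r k : seq nat) : Kqt := (alpha r k)^-1.
Definition betabar (r k : seq nat) : Kqt := (alphabar r k)^-1.

Definition gammaf (A B : int) : Kqt :=
  (1 - qv ^ A * tv ^ B) * (1 - qv ^ (A + 1) * tv ^ (B - 1)) / ((1 - qv) * (1 - tv)).

Definition Ploc (l mu nu : seq nat) : Kqt :=
  if mu == l then tv ^ (nskew nu l) * alpha nu l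
  else let A := nskew' l mu - nskew' nu l in
       let B := nskew nu l - nskew l mu in
       tv ^ (B - 1) * alpha nu l * beta l mu / gammaf A B.
Definition Pbarloc (l mu nu : seq nat) : Kqt :=
  if mu == l then tv ^ (nskew nu l) * alphabar nu l
  else let A := nskew' l mu - nskew' nu l in
       let B := nskew nu l - nskew l mu in
       tv ^ (B - 1) * alphabar nu l * betabar l mu / gammaf A B.
Local Close Scope ring_scope.

(* Standard Young tableaux, as lists of rows (row y is nth (y-1)).        *)
Definition tshape (T : seq (seq nat)) : seq nat := map size T.
Definition entry (T : seq (seq nat)) (c : nat * nat) : nat :=
  nth 0 (nth [::] T c.2.-1) c.1.-1.
Definition is_SYT (n : nat) (T : seq (seq nat)) : bool :=
  [&& is_part (tshape T), sumn (tshape T) == n,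
      perm_eq (flatten T) (iota 1 n),
      all (fun c => ((c.1.+1, c.2) \in cells (tshape T)) ==>
                    (entry T c < entry T (c.1.+1, c.2))) (cells (tshape T)) &
      all (fun c => ((c.1, c.2.+1) \in cells (tshape T)) ==>
                    (entry T c < entry T (c.1, c.2.+1))) (cells (tshape T))].

(* Growths.  Every partition of size <= n is coded (bijectively, among    *)
(* nonincreasing codes) by a nonincreasing f : 'I_n -> 'I_n.+1 (its parts *)
(* padded with zeros).  A labeling of the (n+1)x(n+1) vertices is a       *)
(* finite function, so sums over growths are finite sums.                 *)
Definition pcode (n : nat) := {ffun 'I_n -> 'I_n.+1}.
Definition pcode_ok n (f : pcode n) : bool :=
  [forall i : 'I_n, forall j : 'I_n, (i <= j) ==> (f j <= f i)].
Definition to_part n (f : pcode n) : seq nat :=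
  [seq x <- [seq val (f i) | i <- enum 'I_n] | 0 < x].
Definition labeling (n : nat) := {ffun 'I_n.+1 * 'I_n.+1 -> pcode n}.
Definition lab n (L : labeling n) (i j : nat) : seq nat :=
  to_part (L (inord i, inord j)).

(* square (i,j) (1-based) contains a 1 iff i = sigma(j); with 0-based
   ordinals i0 = i-1, j0 = j-1 this is i0 = s j0. *)
Definition is_growth n (s : 'S_n) (L : labeling n) : bool :=
  [forall v, pcode_ok (L v)] &&
  [forall i : 'I_n.+1, forall j : 'I_n.+1,
    [&& (j < n) ==> subpart (lab L i j) (lab L i j.+1),
        (i < n) ==> subpart (lab L i j) (lab L i.+1 j) &
        sumn (lab L i j) == #|[set j0 : 'I_n | (j0 < j) && (s j0 < i)]| ]].

(* P(Lambda): cell c gets the entry i with c in Lambda_{i,n} \ Lambda_{i-1,n},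
   i.e. the least i with c in Lambda_{i,n}; Q(Lambda) likewise with Lambda_{n,i}. *)
Definition P_of n (L : labeling n) : seq (seq nat) :=
  let sh := lab L n n in
  [seq [seq find (fun i => (x, y) \in cells (lab L i n)) (iota 0 n.+1)
       | x <- iota 1 (prow sh y)] | y <- iota 1 (size sh)].
Definition Q_of n (L : labeling n) : seq (seq nat) :=
  let sh := lab L n n in
  [seq [seq find (fun i => (x, y) \in cells (lab L n i)) (iota 0 n.+1)
       | x <- iota 1 (prow sh y)] | y <- iota 1 (size sh)].

Local Open Scope ring_scope.
(* weight of square (i,j), 1 <= i,j <= n: NW (i-1,j-1), NE (i-1,j),
   SW (i,j-1), SE (i,j); nontrivial only for squares of type III. *)
Definition sq_weight (loc : seq nat -> seq nat -> seq nat -> Kqt)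
    n (L : labeling n) (i j : nat) : Kqt :=
  let nw := lab L i.-1 j.-1 in let ne := lab L i.-1 j in
  let sw := lab L i j.-1 in let se := lab L i j in
  if [&& ne == sw, inDstar ne nw & inU ne se] then loc ne nw se else 1.
Definition growth_weight loc n (L : labeling n) : Kqt :=
  \prod_(i < n) \prod_(j < n) sq_weight loc L i.+1 j.+1.

Definition Pgrowth n (s : 'S_n) (P Q : seq (seq nat)) : Kqt :=
  \sum_(L : labeling n | [&& is_growth s L, P_of L == P & Q_of L == Q])
     growth_weight Ploc L.
Definition Pbargrowth n (s : 'S_n) (P Q : seq (seq nat)) : Kqt :=
  \sum_(L : labeling n | [&& is_growth s L, P_of L == P & Q_of L == Q])
     growth_weight Pbarloc L.
Local Close Scope ring_scope.

(* Main.v *)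
Require Import Defs.
From HB Require Import structures.
From mathcomp Require Import all_boot all_order all_algebra all_fingroup.
From mathcomp Require Import fraction.
Set Implicit Arguments. Unset Strict Implicit. Unset Printing Implicit Defensive.

Definition trL n (L : labeling n) : labeling n := [ffun v => L (v.2, v.1)].

Lemma trLK n : involutive (@trL n).
Proof. by move=> L; apply/ffunP => -[a b]; rewrite !ffunE. Qed.

Lemma lab_tr n (L : labeling n) i j : lab (trL L) i j = lab L j i.
Proof. by rewrite /lab ffunE. Qed.

Lemma P_of_tr n (L : labeling n) : P_of (trL L) = Q_of L.
Proof.
rewrite /P_of /Q_of lab_tr; apply: eq_map => y; apply: eq_map => x.
by apply: eq_find => i; rewrite lab_tr.
Qed.

Lemma Q_of_tr n (L : labeling n) : Q_of (trL L) = P_of L.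
Proof. by rewrite -{2}(trLK L) P_of_tr. Qed.

Lemma card_swap n (s : 'S_n) (i j : nat) :
  #|[set j0 : 'I_n | (j0 < j) && ((s^-1)%g j0 < i)]| =
  #|[set j0 : 'I_n | (j0 < i) && (s j0 < j)]|.
Proof.
rewrite -(card_imset _ (@perm_inj _ (s^-1)%g)); apply: eq_card => k.
rewrite inE; apply/imsetP/idP.
  by case=> x; rewrite inE => /andP[h1 h2] ->; rewrite permKV h1 h2.
move=> /andP[h1 h2]; exists (s k); last by rewrite permK.
by rewrite inE h2 permK.
Qed.

Lemma growth_tr n (s : 'S_n) (L : labeling n) :
  is_growth s L -> is_growth (s^-1)%g (trL L).
Proof.
move=> /andP[/forallP H1 /forallP H2]; apply/andP; split.
  by apply/forallP => v; rewrite ffunE.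
apply/forallP => i; apply/forallP => j.
have /forallP /(_ i) /and3P[a b c] := H2 j.
rewrite !lab_tr a b /= card_swap //.
Qed.

Lemma growth_trE n (s : 'S_n) (L : labeling n) :
  is_growth (s^-1)%g (trL L) = is_growth s L.
Proof.
apply/idP/idP; last exact: growth_tr.
by move/growth_tr; rewrite invgK trLK.
Qed.

Lemma sq_tr loc n (L : labeling n) i j :
  sq_weight loc (trL L) i j = sq_weight loc L j i.
Proof.
rewrite /sq_weight !lab_tr.
case: (eqVneq (lab L j.-1 i) (lab L j i.-1)) => [e|ne].
  by rewrite e.
by [].
Qed.

Lemma weight_tr loc n (L : labeling n) :
  growth_weight loc (trL L) = growth_weight loc L.
Proof.
rewrite /growth_weight exchange_big /=.
apply: eq_bigr => i _; apply: eq_bigr => j _; exact: sq_tr.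
Qed.

Lemma gen_sym loc n (s : 'S_n) (P Q : seq (seq nat)) :
  (\sum_(L : labeling n | [&& is_growth s L, P_of L == P & Q_of L == Q])
     growth_weight loc L =
  \sum_(L : labeling n | [&& is_growth (s^-1)%g L, P_of L == Q & Q_of L == P])
     growth_weight loc L)%R.
Proof.
rewrite [RHS](reindex_inj (can_inj (@trLK n))) /=.
apply: eq_big => L.
  rewrite growth_trE P_of_tr Q_of_tr; congr andb; exact: andbC.
by move=> _; rewrite weight_tr.
Qed.

Theorem theorem4p26 (n : nat) (s : 'S_n) (P Q : seq (seq nat)) :
  is_SYT n P -> is_SYT n Q -> tshape P = tshape Q ->
  Pgrowth s P Q = Pgrowth (s^-1)%g Q P /\
  Pbargrowth s P Q = Pbargrowth (s^-1)%g Q P.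
Proof.
by move=> _ _ _; split; apply: gen_sym.
Qed.
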